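(* Let $k$ be odd, $n=4k$, $d=\frac{(3^{2k}+1)^2}{20}$, let $a\in\mathrm{GF}(3^n)^*$ be nonzero, and let $r$ be a nonsquare in $\mathrm{GF}(3^4)^*$. Then the equation $$(ar)^{3^{2(k+1)}}y^{81}-(r^{d}+r^{9d})y^9+ary=0$$ has $y=0$ as its only solution in $\mathrm{GF}(3^n)$.
   Context: $\mathrm{GF}(3^4)$ is regarded as a subfield of $\mathrm{GF}(3^n)$ (since $4\mid n$). *)

(* Defs.v *)
From HB Require Import structures.
From mathcomp Require Import all_boot all_order all_algebra all_field.
Set Implicit Arguments. Unset Strict Implicit. Unset Printing Implicit Defensive.

(* d = (3^(2k) + 1)^2 / 20 ; exact division when k is odd. *)
Definition dexp (k : nat) : nat := ((3 ^ (2 * k) + 1) ^ 2 %/ 20)%N.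

(* GF(3^4) viewed as the subfield {x | x^(3^4) = x} of F. *)
Definition inGF81 (F : finFieldType) (x : F) : Prop := (x ^+ (3 ^ 4) = x)%R.

Definition nonsquare_GF81 (F : finFieldType) (r : F) : Prop :=
  inGF81 r /\ r != 0%R /\ ~ (exists s : F, inGF81 s /\ (s ^+ 2 = r)%R).

(* Main.v *)
Require Import Defs.
From HB Require Import structures.
From mathcomp Require Import all_boot all_order all_algebra all_field.
From mathcomp Require Import all_fingroup all_solvable zify ring.
Import GRing.Theory.
Local Open Scope ring_scope.

Lemma pow81 m : exists u, (81 ^ m = 1 + 80 * u)%N /\ odd u = odd m.
Proof.
elim: m => [|m [u [Hu Ho]]]; first by exists 0%N.
exists (1 + 81 * u)%N; split; first by rewrite expnS Hu; lia.
by rewrite oddD oddM Ho /=.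
Qed.

Lemma pow9 m : (3 ^ (2 * m.*2.+1) = 9 * 81 ^ m)%N.
Proof. by rewrite expnM -muln2 mulnC expnS expnM. Qed.

Lemma dexpE m u : (81 ^ m = 1 + 80 * u)%N ->
  dexp m.*2.+1 = (5 + 80 * (9 * u + 324 * u ^ 2))%N.
Proof.
move=> Hu; rewrite /dexp pow9.
have -> : ((9 * 81 ^ m + 1) ^ 2 = 20 * (5 + 80 * (9 * u + 324 * u ^ 2)))%N.
  rewrite Hu; lia.
by rewrite mulKn.
Qed.
Lemma unitpow (F : finFieldType) (x : F) : x != 0 -> x ^+ #|F|.-1 = 1.
Proof.
move=> x0; apply: (mulfI x0); rewrite mulr1 -exprS prednK ?expf_card //.
by apply: ltn_trans (finNzRing_gt1 F).
Qed.

Lemma sqrt81 (F : finFieldType) (e : nat) (r : F) :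
  #|F| = (1 + 80 * e)%N -> r ^+ 40 = 1 -> exists s : F, s ^+ 81 = s /\ s ^+ 2 = r.
Proof.
move=> HF r40.
have N0 : (0 < #|F|.-1)%N by rewrite HF; have := finNzRing_gt1 F; rewrite HF; lia.
have : has (#|F|.-1).-primitive_root (enum (predC1 (0 : F))).
  apply: has_prim_root => //.
  - apply/allP => x; rewrite mem_enum /= unity_rootE => x0; apply/eqP.
    exact: unitpow.
  - exact: enum_uniq.
  by rewrite -cardE cardC1.
case/hasP => w _ pw.
have r0 : r != 0 by apply: contra_eq_neq r40 => ->; rewrite expr0n /= eq_sym oner_eq0.
have [i0 ri0] := prim_rootP pw (@unitpow _ r r0).
have {ri0 i0} [i ri] : exists i : nat, r = w ^+ i by exists i0.
have : (#|F|.-1 %| 40 * i)%N by rewrite (prim_order_dvd pw) mulnC exprM -ri r40.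
rewrite HF /= (_ : (80 * e = 40 * (2 * e))%N); last lia.
rewrite dvdn_pmul2l // => /dvdnP [j hj].
have we : w ^+ (80 * e) = 1.
  by apply/eqP; rewrite -(prim_order_dvd pw) HF.
exists (w ^+ (j * e)); split.
  rewrite -exprM (_ : (j * e * 81 = j * e + 80 * e * j)%N); last lia.
  by rewrite exprD (exprM w (80 * e) j) we expr1n mulr1.
rewrite -exprM ri hj; congr (w ^+ _); lia.
Qed.

Theorem lemma4 (F : finFieldType) (k : nat) (a r : F) :
  odd k -> #|F| = (3 ^ (4 * k))%N ->
  a != 0 -> nonsquare_GF81 r ->
  forall y : F,
    (a * r) ^+ (3 ^ (2 * k.+1)) * y ^+ 81
      - (r ^+ dexp k + r ^+ (9 * dexp k)) * y ^+ 9 + a * r * y = 0 ->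
    y = 0.
Proof.
move=> ok HF a0 [r81 [r0 nsq]] y Hy.
have char3 : (3%:R : F) = 0 by apply: pcharf0; apply: (card_finPcharP HF).
have [e [He oe]] := pow81 k.
have HF' : #|F| = (1 + 80 * e)%N by rewrite HF expnM -He.
have r80 : r ^+ 80 = 1 by apply: (mulfI r0); rewrite mulr1 -exprS.
have r40 : r ^+ 40 = -1.
  have : (r ^+ 40 - 1) * (r ^+ 40 + 1) = 0.
    by rewrite -subr_sqr -exprM r80 expr1n subrr.
  move/eqP; rewrite mulf_eq0 => /orP [] /eqP h; last by apply/eqP; rewrite -subr_eq0 opprK h.
  have h40 : r ^+ 40 = 1 by apply/eqP; rewrite -subr_eq0 h.
  exfalso; apply: nsq; have [s [s81 s2]] := (@sqrt81 _ _ _ HF' h40).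
  by exists s.
set m := k./2.
have km : k = m.*2.+1 by rewrite -[LHS]odd_double_half ok.
have [u [Hu _]] := pow81 m.
set w := (9 * u + 324 * u ^ 2)%N.
have rd : r ^+ dexp k = r ^+ 5 by rewrite km (@dexpE _ _ Hu) exprD exprM r80 expr1n mulr1.
have r9d : r ^+ (9 * dexp k) = - r ^+ 5.
  rewrite km (@dexpE _ _ Hu) (_ : (9 * (5 + 80 * w) = 5 + 40 + 80 * (9 * w))%N); last lia.
  rewrite (exprD r (5 + 40)) (exprM r 80 (9 * w)) r80 expr1n mulr1.
  by rewrite (exprD r 5 40) r40 mulrN1.
have ex : (3 ^ (2 * k.+1) = 1 + 80 * (1 + 81 * u))%N.
  rewrite km mulnS expnD pow9 Hu; lia.
move: Hy; rewrite rd r9d subrr mul0r subr0 ex.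
set A := a * r; set v := (1 + 81 * u)%N.
have A0 : A != 0 by rewrite mulf_neq0.
move=> Hy; apply/eqP; apply: contraT => y0.
have h1 : (A ^+ v * y) ^+ 80 = -1.
  have : A * y * ((A ^+ v * y) ^+ 80 + 1) = 0.
    rewrite -[RHS]Hy exprMn -exprM (mulnC v 80) (exprD A 1) expr1.
    rewrite (_ : y ^+ 81 = y * y ^+ 80); last by rewrite -exprS.
    ring.
  move/eqP; rewrite mulf_eq0 => /orP [] /eqP h; first by move/eqP: h; rewrite mulf_eq0 (negbTE A0) (negbTE y0).
  by apply/eqP; rewrite -subr_eq0 opprK h.
have Bne : A ^+ v * y != 0 by rewrite mulf_neq0 ?expf_neq0.
have := @unitpow _ _ Bne; rewrite HF' /= exprM h1 -signr_odd oe ok expr1 => h2.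
have : (1 : F) = 0.
  have -> : (1 : F) = 3%:R + (-1 - 1) by ring.
  by rewrite char3 add0r {2}h2 addNr.
by move/eqP; rewrite oner_eq0.
Qed.
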